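(* For every $p\in k(x)$ there exists a circuit $c_p\in\mathsf{ACirc}[0,1]$ with $[\![c_p]\!]=\{(\bullet,p)\}$.
   Context: Fix a field $k$; $k(x)$ is the field of fractions of polynomials in $x$ over $k$. Circuits: terms built from generators with sorts $(n,m)$: copier $\Delta:(1,2)$, discard $!:(1,0)$, amplifier $\mathsf{s}_r:(1,1)$ ($r\in k$), register $\mathsf{x}:(1,1)$, adder $+:(2,1)$, zero $0:(0,1)$, one $\mathbf{1}:(0,1)$; mirror images $\Delta^{op}:(2,1)$, $!^{op}:(0,1)$, $\mathsf{s}_r^{op}$, $\mathsf{x}^{op}:(1,1)$, $+^{op}:(1,2)$, $0^{op}:(1,0)$, $\mathbf{1}^{op}:(1,0)$; $\mathrm{id}_0:(0,0),\mathrm{id}_1:(1,1),\mathrm{sw}:(2,2)$; closed under sequential composition $;$ and parallel composition $\oplus$. $\mathsf{ACirc}[n,m]$ is the set of circuits of sort $(n,m)$. Denotation: $[\![\Delta]\!]=\{(p,(p,p))\}$, $[\![!]\!]=\{(p,\bullet)\}$, $[\![+]\!]=\{((p,q),p+q)\}$, $[\![0]\!]=\{(\bullet,0)\}$, $[\![\mathbf 1]\!]=\{(\bullet,1)\}$, $[\![\mathsf s_r]\!]=\{(p,rp)\}$, $[\![\mathsf x]\!]=\{(p,px)\}$ ($p,q\in k(x)$, $\bullet$ the unique element of $k(x)^0$); mirrored generators denote converse relations; $\mathrm{id}_1,\mathrm{sw},\mathrm{id}_0$ denote identity, swap, $\{(\bullet,\bullet)\}$; $;$ is relational composition and $\oplus$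 product of relations. *)

(* Defs.v *)
From HB Require Import structures.
From mathcomp Require Import all_boot all_algebra fraction.
Set Implicit Arguments. Unset Strict Implicit. Unset Printing Implicit Defensive.
Import GRing.Theory.
Local Open Scope ring_scope.

Definition ratfun (k : fieldType) := {fraction {poly k}}.
Definition cst (k : fieldType) (r : k) : ratfun k := FracField.tofrac (r%:P).
Definition xvar (k : fieldType) : ratfun k := FracField.tofrac ('X : {poly k}).

Inductive circ (k : fieldType) : nat -> nat -> Type :=
| Copy : circ k 1 2
| Disc : circ k 1 0
| Amp : k -> circ k 1 1
| Reg : circ k 1 1
| Add : circ k 2 1
| Zero : circ k 0 1
| One : circ k 0 1
| CopyOp : circ k 2 1
| DiscOp : circ k 0 1
| AmpOp : k -> circ k 1 1
| RegOp : circ k 1 1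
| AddOp : circ k 1 2
| ZeroOp : circ k 1 0
| OneOp : circ k 1 0
| Id0 : circ k 0 0
| Id1 : circ k 1 1
| Sw : circ k 2 2
| Seq : forall n m l, circ k n m -> circ k m l -> circ k n l
| Par : forall n1 m1 n2 m2, circ k n1 m1 -> circ k n2 m2 -> circ k (n1 + n2) (m1 + m2).

Definition rel_of (k : fieldType) (n m : nat) :=
  n.-tuple (ratfun k) -> m.-tuple (ratfun k) -> Prop.

Fixpoint sem (k : fieldType) (n m : nat) (c : circ k n m) : rel_of k n m :=
  match c in circ _ n m return rel_of k n m with
  | Copy => fun u v => exists p, u = [tuple p] /\ v = [tuple p; p]
  | Disc => fun u v => exists p, u = [tuple p] /\ v = [tuple]
  | Amp r => fun u v => exists p, u = [tuple p] /\ v = [tuple cst r * p]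
  | Reg => fun u v => exists p, u = [tuple p] /\ v = [tuple p * xvar k]
  | Add => fun u v => exists p q, u = [tuple p; q] /\ v = [tuple p + q]
  | Zero => fun u v => u = [tuple] /\ v = [tuple 0]
  | One => fun u v => u = [tuple] /\ v = [tuple 1]
  | CopyOp => fun u v => exists p, u = [tuple p; p] /\ v = [tuple p]
  | DiscOp => fun u v => exists p, u = [tuple] /\ v = [tuple p]
  | AmpOp r => fun u v => exists p, u = [tuple cst r * p] /\ v = [tuple p]
  | RegOp => fun u v => exists p, u = [tuple p * xvar k] /\ v = [tuple p]
  | AddOp => fun u v => exists p q, u = [tuple p + q] /\ v = [tuple p; q]
  | ZeroOp => fun u v => u = [tuple 0] /\ v = [tuple]
  | OneOp => fun u v => u = [tuple 1] /\ v = [tuple]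
  | Id0 => fun u v => u = [tuple] /\ v = [tuple]
  | Id1 => fun u v => u = v
  | Sw => fun u v => exists p q, u = [tuple p; q] /\ v = [tuple q; p]
  | Seq n m l c1 c2 => fun u w => exists v, sem c1 u v /\ sem c2 v w
  | Par n1 m1 n2 m2 c1 c2 => fun u v =>
      exists u1 u2 v1 v2, u = cat_tuple u1 u2 /\ v = cat_tuple v1 v2 /\
                          sem c1 u1 v1 /\ sem c2 u2 v2
  end.

(* Main.v *)
Require Import Defs.
From mathcomp Require Import all_boot all_algebra fraction generic_quotient ring.
Import GRing.Theory.
Local Open Scope ring_scope.
Set Implicit Arguments.
Lemma frac_dec (k : fieldType) (p : ratfun k) :
  exists a b : {poly k}, b != 0 /\ p * FracField.tofrac b = FracField.tofrac a.
Proof.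
elim/quotW: p => x.
exists x.1, x.2; split; first exact: denom_ratioP.
unlock FracField.tofrac.
rewrite /=.
have := FracField.pi_mul x (Ratio x.2 1).
move=> H; refine (etrans (esym H) _).
apply/eqP; rewrite FracField.equivf_def.
rewrite /FracField.mulf /= !numden_Ratio ?oner_neq0 ?mulf_neq0 //. 1: by rewrite !mulr1 mulrC. all: by rewrite ?oner_neq0 ?mulf_neq0 ?denom_ratioP ?oner_neq0.
Qed.


Section S.
Variable k : fieldType.
Local Notation F := (ratfun k).

Lemma ex1 (t : 1.-tuple F) : exists a, t = [tuple a].
Proof. case: t / tupleP => a t; exists a; rewrite (tuple0 t); exact: val_inj. Qed.
Lemma ex2 (t : 2.-tuple F) : exists a b, t = [tuple a; b].
Proof.
case: t / tupleP => a t; case: t / tupleP => b t; exists a, b.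
rewrite (tuple0 t); exact: val_inj.
Qed.

Ltac destr := repeat match goal with
 | t : tuple_of _ _ |- _ => first [ have [? ?] := ex1 t; subst t
     | have [? [? ?]] := ex2 t; subst t | have ? := tuple0 t; subst t ]
 | H : @eq (tuple_of _ _) _ _ |- _ => move/(congr1 val): H => /= H; case: H => *
 | H : exists _, _ |- _ => case: H => *
 | H : _ /\ _ |- _ => case: H => *
 end; subst.

Fixpoint mulc (s : seq k) : circ k 1 1 :=
 match s with
 | [::] => Seq (@Disc k) (@Zero k)
 | c :: s' => Seq (@Copy k) (Seq (Par (Amp c) (Seq (mulc s') (@Reg k))) (@Add k))
 end.

Definition P (s : seq k) : F := FracField.tofrac (Poly s).

Lemma sem_mulc s a b : sem (mulc s) [tuple a] [tuple b] <-> b = P s * a.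
Proof.
elim: s a b => [|c s IH] a b /=.
  rewrite /P /= tofrac0 mul0r; split => H.
    by destr.
  subst b; exists [tuple]; split; first by exists a.
  done.
have EP : P (c :: s) * a = cst c * a + P s * a * xvar k.
  rewrite /P /cst /xvar /= cons_poly_def rmorphD rmorphM /=. ring.
rewrite EP; split => H.
  destr. match goal with H : sem (mulc _) _ _ |- _ => move: H; rewrite IH => -> end. done.
subst b.
exists [tuple a; a]; split; first by exists a.
exists [tuple cst c * a; P s * a * xvar k]; split; last by exists (cst c * a), (P s * a * xvar k).
exists [tuple a], [tuple a], [tuple cst c * a], [tuple P s * a * xvar k].
split; first exact: val_inj.
split; first exact: val_inj.
split; first by exists a.
exists [tuple P s * a]; split; first by rewrite IH.
by exists (P s * a).
Qed.

Ltac destr2 := repeat (destr; try match goal with H : sem (mulc _) [tuple _] [tuple _] |- _ => move: H; rewrite sem_mulc => H end).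

Definition pc s : circ k 0 1 := Seq (@One k) (mulc s).
Lemma sem_pc s b : sem (pc s) [tuple] [tuple b] <-> b = P s.
Proof.
split => H.
  move: H => /= H; destr2; by rewrite mulr1.
subst b; exists [tuple 1]; split; first by [].
by rewrite sem_mulc mulr1.
Qed.

Definition test s : circ k 1 0 := Seq (Par (@Id1 k) (pc s)) (Seq (@CopyOp k) (@Disc k)).
Lemma sem_test s a : sem (test s) [tuple a] [tuple] <-> a = P s.
Proof.
split => H.
  move: H => /= H; destr2; by rewrite mulr1.
subst a; exists [tuple P s; P s]; split.
  exists [tuple P s], [tuple], [tuple P s], [tuple P s].
  split; first exact: val_inj. split; first exact: val_inj.
  split; first by []. by apply/sem_pc.
exists [tuple P s]; split; first by exists (P s).
by exists (P s).
Qed.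

Definition final a b : circ k 0 1 :=
  Seq (@DiscOp k) (Seq (@Copy k) (Par (Seq (mulc b) (test a)) (@Id1 k))).
Lemma sem_final a b q : sem (final a b) [tuple] [tuple q] <-> P b * q = P a.
Proof.
split => H.
  move: H => /= H; destr2.
  match goal with H : _ = _ ++ _ |- _ => move: H => /= [->] end.
  match goal with H : P a * 1 = _ |- _ => by rewrite -H mulr1 end.
exists [tuple q]; split; first by exists q.
exists [tuple q; q]; split; first by exists q.
exists [tuple q], [tuple q], [tuple], [tuple q].
split; first exact: val_inj. split; first exact: val_inj.
split; last by [].
exists [tuple P a]; split; first by rewrite sem_mulc H.
exact/sem_test.
Qed.
End S.
Theorem lemma1 (k : fieldType) (p : ratfun k) :
  exists c : circ k 0 1,
    forall (u : 0.-tuple (ratfun k)) (v : 1.-tuple (ratfun k)),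
      sem c u v <-> (u = [tuple] /\ v = [tuple p]).
Proof.
have [a [b [bn0 Hp]]] := frac_dec p.
exists (@final k (polyseq a) (polyseq b)) => u v.
rewrite (tuple0 u); have [q ->] := ex1 v.
have nz : @P k (polyseq b) != 0 by rewrite /P polyseqK tofrac_eq0.
rewrite sem_final /P !polyseqK -Hp.
split => [H|[_ H]].
  split => //; congr [tuple _].
  by apply: (mulIf (x:=FracField.tofrac b)); rewrite ?tofrac_eq0 // mulrC.
by move/(congr1 val): H => /= [->]; rewrite mulrC.
Qed.
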